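(* Consider the Boosting SDP for input matrix $\hat A\in\mathbb R^{n\times n}$, labels $\ell\in\{-1,1\}^n$ with $L=\ell\ell^T$, and parameters $0<\zeta<1$, $d>0$, $K\ge10^4$. Let $\tilde\ell\in\{-1,1\}^n$ agree with $\ell$ on at least $(1-\theta)n$ coordinates, where $\theta\le\zeta$, and let $\tilde L=\tilde\ell\tilde\ell^T$. Suppose that for some $\gamma\le\zeta$ there are a subset $S\subseteq[n]$ with $|S|\ge(1-\gamma)n$ and an $n\times n$ matrix $F$ such that: (i) $(F\odot\tilde L)_{S\times S}$ is entrywise nonnegative; (ii) $(\hat A-F)_{S\times S}=Y+Z$ with $\|Y\|_{\mathrm{op}}\le Kd$ and $|Z_{ij}|\le Kd/(\zeta n)$ for all $i,j$; (iii) $((\hat A-F)\odot\tilde L)_{S\times S}$ is $(10dK^3,\gamma dK)$-resolvable. Then for any feasible solution of the Boosting SDP with $\rho\le\theta+\gamma$, the number of $i\in S$ with $w_i\le1-1/\sqrt K$ and $\ell_i\ne\tilde\ell_i$ is at most $10(\theta+\gamma)n/\sqrt K$.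
   Context: Notation: $J$ all-ones matrix, $\odot$ entrywise product, $\langle X,Y\rangle=\sum_{ij}X_{ij}Y_{ij}$, $\|\cdot\|_1$ trace norm, $\|\cdot\|_{\mathrm{op}}$ operator norm, $M_{S\times T}$ submatrix indexed by $S\times T$. Resolvability: an $m\times m$ matrix $X$ is $(d_1,d_2)$-resolvable if for all $x_1,\dots,x_m\in[0,1]$ with $\sum_ix_i\le10^{-6}m$, $\langle X,Y_x\rangle\ge d_1\sum_ix_i-d_2m$, where $(Y_x)_{ij}=x_i$. Pseudorectangles: $\mathcal R_n(\theta)$ is the set of $n\times n$ matrices $M$ with $0\le M_{ij}\le1$, $\sum_{ij}|M_{ij}|\le\theta^2n^2$, $\|M\|_1\le\theta n$. Approximate row selectors: $(M,x_1,\dots,x_n)\in\mathcal S_n(\theta,\delta)$ if $0\le M_{ij}\le1$, $0\le x_i\le1$, $\sum_ix_i\le\theta n$, and $M=Y_x-N$ for some $N\in\mathcal R_n(\sqrt{\theta\delta})$. Boosting SDP (inputs $\hat A,\ell$, parameters $\zeta,d,K$ with $0<\zeta<1$, $K\ge10^4$): variables $\rho\in[0,\zeta]$, $w\in\mathbb R^n$, $W\in\mathbb R^{n\times n}$, $N\in\mathcal R_n(\rho)$ with $0\le w_i\le1$, $\sum_iw_i\le\rho n$, $W_{ij}\ge0$, $W_{ij}=1-w_i-w_j+N_{ij}$ for all $i,j$, and for every $\rho'$ with $\rho/K\le\rho'\le\zeta$ and every $(M,x)\in\mathcal S_n(\rho',K\rho')$: $\langle\hat A\odot L\odot W,M\rangle\ge10dK^2\big(K\sum_ix_i(1-w_i)-\rho'n\big)$,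 where $L=\ell\ell^T$. Objective: minimize $\rho$. *)

(* Defs.v *)
From mathcomp Require Import all_boot all_order all_algebra.
From mathcomp Require Import all_classical all_reals.
Set Implicit Arguments. Unset Strict Implicit. Unset Printing Implicit Defensive.
Import Order.TTheory GRing.Theory Num.Theory.
Local Open Scope ring_scope.

Section Defs.
Variable R : realType.

Definition hadamard m p (A B : 'M[R]_(m, p)) : 'M[R]_(m, p) :=
  \matrix_(i, j) (A i j * B i j).

Definition frob m p (A B : 'M[R]_(m, p)) : R :=
  \sum_i \sum_j A i j * B i j.

Definition opnorm m p (M : 'M[R]_(m, p)) : R :=
  sup [set r : R | exists (u : 'I_m -> R) (v : 'I_p -> R),
        \sum_i u i ^+ 2 <= 1 /\ \sum_j v j ^+ 2 <= 1 /\
        r = `| \sum_i \sum_j u i * M i j * v j |]%classic.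

Definition tracenorm n (M : 'M[R]_n) : R :=
  sup [set r : R | exists B : 'M[R]_n, opnorm B <= 1 /\ r = frob M B]%classic.

(* submatrix M_{S x S}, indices of S enumerated in increasing order *)
Definition submxSS n (S : {set 'I_n}) (M : 'M[R]_n) : 'M[R]_#|S| :=
  \matrix_(i, j) M (enum_val i) (enum_val j).

Definition rowmat n (x : 'I_n -> R) : 'M[R]_n := \matrix_(i, j) x i.

Definition outer n (l : 'I_n -> R) : 'M[R]_n := \matrix_(i, j) (l i * l j).

Definition is_sign_vector n (l : 'I_n -> R) : Prop :=
  forall i, l i = 1 \/ l i = -1.

Definition resolvable m (X : 'M[R]_m) (d1 d2 : R) : Prop :=
  forall x : 'I_m -> R,
    (forall i, 0 <= x i <= 1) ->
    \sum_i x i <= 10 ^- 6 * m%:R ->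
    frob X (rowmat x) >= d1 * (\sum_i x i) - d2 * m%:R.

Definition pseudorect n (theta : R) (M : 'M[R]_n) : Prop :=
  (forall i j, 0 <= M i j <= 1) /\
  \sum_i \sum_j `|M i j| <= theta ^+ 2 * n%:R ^+ 2 /\
  tracenorm M <= theta * n%:R.

Definition rowsel n (theta delta : R) (M : 'M[R]_n) (x : 'I_n -> R) : Prop :=
  (forall i j, 0 <= M i j <= 1) /\
  (forall i, 0 <= x i <= 1) /\
  \sum_i x i <= theta * n%:R /\
  exists N : 'M[R]_n,
    pseudorect (Num.sqrt (theta * delta)) N /\ M = rowmat x - N.

Definition boosting_feasible n (Ahat : 'M[R]_n) (l : 'I_n -> R)
    (zeta d K : R) (rho : R) (w : 'I_n -> R) (W N : 'M[R]_n) : Prop :=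
  0 <= rho <= zeta /\
  pseudorect rho N /\
  (forall i, 0 <= w i <= 1) /\
  \sum_i w i <= rho * n%:R /\
  (forall i j, 0 <= W i j) /\
  (forall i j, W i j = 1 - w i - w j + N i j) /\
  (forall (rho' : R) (M : 'M[R]_n) (x : 'I_n -> R),
     rho / K <= rho' <= zeta ->
     rowsel rho' (K * rho') M x ->
     frob (hadamard (hadamard Ahat (outer l)) W) M >=
       10 * d * K ^+ 2 * (K * (\sum_i x i * (1 - w i)) - rho' * n%:R)).

End Defs.

(* Main.v *)
Require Import Defs.
From mathcomp Require Import all_boot all_order all_algebra.
From mathcomp Require Import all_classical all_reals.
From mathcomp Require Import ring lra.
Import Order.TTheory GRing.Theory Num.Theory.
Local Open Scope ring_scope.

Set Implicit Arguments. Unset Strict Implicit. Unset Printing Implicit Defensive.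

Section H.
Variable R : realType.

Lemma sq_le_sum (p : nat) (u : 'I_p -> R) i : u i ^+ 2 <= \sum_k u k ^+ 2.
Proof.
rewrite (bigD1 i) //= lerDl; apply: sumr_ge0 => k _; exact: sqr_ge0.
Qed.

Lemma abs_le1 (p : nat) (u : 'I_p -> R) i : \sum_k u k ^+ 2 <= 1 -> `|u i| <= 1.
Proof.
move=> h; have := le_trans (sq_le_sum u i) h.
rewrite -real_normK ?num_real // => h2; have h3 := normr_ge0 (u i); nra.
Qed.

Lemma opnorm_ge p q (M : 'M[R]_(p,q)) (u : 'I_p -> R) (v : 'I_q -> R) :
  \sum_i u i ^+ 2 <= 1 -> \sum_j v j ^+ 2 <= 1 ->
  `| \sum_i \sum_j u i * M i j * v j | <= opnorm M.
Proof.
move=> hu hv; apply: ub_le_sup; last by exists u, v.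
exists (\sum_i \sum_j `|M i j|) => r [u' [v' [hu' [hv' ->]]]].
apply: (le_trans (ler_norm_sum _ _ _)); apply: ler_sum => i _.
apply: (le_trans (ler_norm_sum _ _ _)); apply: ler_sum => j _.
rewrite !normrM.
have h1 := abs_le1 i hu'; have h2 := abs_le1 j hv'.
have h3 := normr_ge0 (u' i); have h4 := normr_ge0 (v' j); have h5 := normr_ge0 (M i j).
rewrite -[X in _ <= X]mulr1; apply: ler_pM => //; first exact: mulr_ge0.
by rewrite -[X in _ <= X]mul1r; apply: ler_pM.
Qed.


Lemma sum_sq_ge0 p (u : 'I_p -> R) : 0 <= \sum_i u i ^+ 2.
Proof. by apply: sumr_ge0 => i _; exact: sqr_ge0. Qed.

Lemma sum_sq_eq0 p (u : 'I_p -> R) : \sum_i u i ^+ 2 <= 0 -> forall i, u i = 0.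
Proof.
move=> h i; have := le_trans (sq_le_sum u i) h.
rewrite -real_normK ?num_real // => h2; have h3 := normr_ge0 (u i).
by apply/eqP; rewrite -normr_eq0; apply/eqP; nra.
Qed.

Lemma normalize_sq p (u : 'I_p -> R) (a : R) : a = Num.sqrt (\sum_i u i ^+ 2) -> 0 < a ->
  \sum_i (u i / a) ^+ 2 <= 1.
Proof.
move=> ha a0.
have e : \sum_i (u i / a) ^+ 2 = (\sum_i u i ^+ 2) / a ^+ 2.
  by rewrite mulr_suml; apply: eq_bigr => i _; rewrite expr_div_n.
rewrite e ha sqr_sqrtr ?sum_sq_ge0 // divff //.
by move: a0; rewrite ha sqrtr_gt0 => /gt_eqF ->.
Qed.

Lemma opnorm_bil p q (M : 'M[R]_(p,q)) (u : 'I_p -> R) (v : 'I_q -> R) :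
  `| \sum_i \sum_j u i * M i j * v j | <=
    opnorm M * Num.sqrt (\sum_i u i ^+ 2) * Num.sqrt (\sum_j v j ^+ 2).
Proof.
set a := Num.sqrt _; set b := Num.sqrt _.
have [a0|apos] := eqVneq a 0.
  have su : \sum_i u i ^+ 2 <= 0 by rewrite -sqrtr_eq0 -/a a0.
  have u0 := sum_sq_eq0 su.
  rewrite a0 mulr0 mul0r big1 ?normr0 // => i _.
  by rewrite big1 // => j _; rewrite u0 !mul0r.
have [b0|bpos] := eqVneq b 0.
  have su : \sum_j v j ^+ 2 <= 0 by rewrite -sqrtr_eq0 -/b b0.
  have v0 := sum_sq_eq0 su.
  rewrite b0 mulr0 big1 ?normr0 // => i _.
  by rewrite big1 // => j _; rewrite v0 !mulr0.
have ag : 0 < a by rewrite lt_neqAle eq_sym apos sqrtr_ge0.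
have bg : 0 < b by rewrite lt_neqAle eq_sym bpos sqrtr_ge0.
have := opnorm_ge M (normalize_sq (erefl a) ag) (normalize_sq (erefl b) bg).
have -> : \sum_i \sum_j u i / a * M i j * (v j / b) = (\sum_i \sum_j u i * M i j * v j) / (a * b).
  rewrite mulr_suml; apply: eq_bigr => i _; rewrite mulr_suml; apply: eq_bigr => j _.
  by rewrite invfM; field; rewrite ?gt_eqF.
rewrite normrM (@gtr0_norm _ (a * b)^-1) ?invr_gt0 ?mulr_gt0 // => h.
by rewrite -mulrA -ler_pdivrMr ?mulr_gt0.

Qed.

Lemma opnorm_ge0 p q (M : 'M[R]_(p,q)) : 0 <= opnorm M.
Proof.
have h0 : \sum_(i < p) (fun _ => (0:R)) i ^+ 2 <= 1 by rewrite big1 ?ler01 // => *; rewrite expr0n.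
have h1 : \sum_(i < q) (fun _ => (0:R)) i ^+ 2 <= 1 by rewrite big1 ?ler01 // => *; rewrite expr0n.
have := opnorm_ge M h0 h1.
by rewrite big1 ?normr0 // => i _; rewrite big1 // => j _; rewrite !mul0r.
Qed.

Lemma opnorm_le p q (M : 'M[R]_(p,q)) c :
  (forall (u : 'I_p -> R) (v : 'I_q -> R), \sum_i u i ^+ 2 <= 1 -> \sum_j v j ^+ 2 <= 1 ->
     `| \sum_i \sum_j u i * M i j * v j | <= c) -> opnorm M <= c.
Proof.
move=> h; apply: ge_sup.
  exists `| \sum_i \sum_j (fun _ => 0) i * M i j * (fun _ => 0) j |.
  exists (fun _ => 0), (fun _ => 0); split; last split => //.
    by rewrite big1 ?ler01 // => *; rewrite expr0n.
  by rewrite big1 ?ler01 // => *; rewrite expr0n.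
by move=> r [u [v [hu [hv ->]]]]; apply: h.
Qed.

Lemma delta_sq p (i : 'I_p) : \sum_k ((k == i)%:R : R) ^+ 2 <= 1.
Proof.
rewrite (bigD1 i) //= eqxx big1 ?addr0 ?expr1n // => k /negbTE ->.
by rewrite expr0n.
Qed.

Lemma entry_le_opnorm p q (M : 'M[R]_(p,q)) i j : `|M i j| <= opnorm M.
Proof.
have := opnorm_ge M (delta_sq i) (delta_sq j).
rewrite (bigD1 i) //= (bigD1 j) //= !eqxx !big1 ?addr0 ?mul1r ?mulr1 //.
  by move=> k /negbTE ->; rewrite big1 // => *; rewrite !mul0r.
by move=> k /negbTE ->; rewrite mulr0.
Qed.

Lemma tracenorm_ge n (N B : 'M[R]_n) : opnorm B <= 1 -> frob N B <= tracenorm N.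
Proof.
move=> hB; apply: ub_le_sup; last by exists B.
exists (\sum_i \sum_j `|N i j|) => r [B' [hB' ->]].
apply: (le_trans (ler_norm _)).
apply: (le_trans (ler_norm_sum _ _ _)); apply: ler_sum => i _.
apply: (le_trans (ler_norm_sum _ _ _)); apply: ler_sum => j _.
rewrite normrM -[X in _ <= X]mulr1; apply: ler_pM => //.
exact: le_trans (entry_le_opnorm B' i j) hB'.
Qed.

Lemma tracenorm_le n (N : 'M[R]_n) c :
  (forall B : 'M[R]_n, opnorm B <= 1 -> frob N B <= c) -> tracenorm N <= c.
Proof.
move=> h; apply: ge_sup.
  exists (frob N 0), 0; split => //.
  apply: opnorm_le => u v _ _; rewrite big1 ?normr0 ?ler01 // => i _.
  by rewrite big1 // => j _; rewrite mxE mulr0 mul0r.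
by move=> r [B [hB ->]]; apply: h.
Qed.

Lemma sqrt_mul_le (U V : R) : 0 <= U -> 0 <= V -> Num.sqrt U * Num.sqrt V <= (U + V) / 2.
Proof.
move=> hU hV; have h1 := sqr_sqrtr hU; have h2 := sqr_sqrtr hV.
have := sqr_ge0 (Num.sqrt U - Num.sqrt V); nra.
Qed.

Lemma bil_le p q (M : 'M[R]_(p,q)) (D U V : R) (u : 'I_p -> R) (v : 'I_q -> R) :
  opnorm M <= D -> \sum_i u i ^+ 2 <= U -> \sum_j v j ^+ 2 <= V ->
  `| \sum_i \sum_j u i * M i j * v j | <= D * ((U + V) / 2).
Proof.
move=> hD hU hV; apply: (le_trans (opnorm_bil M u v)).
have hU0 : 0 <= U by apply: le_trans hU; exact: sum_sq_ge0.
have hV0 : 0 <= V by apply: le_trans hV; exact: sum_sq_ge0.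
have o0 := opnorm_ge0 M.
have s1 : Num.sqrt (\sum_i u i ^+ 2) <= Num.sqrt U by rewrite ler_sqrt.
have s2 : Num.sqrt (\sum_i v i ^+ 2) <= Num.sqrt V by rewrite ler_sqrt.
have := sqrt_mul_le hU0 hV0.
have := sqrtr_ge0 (\sum_i u i ^+ 2); have := sqrtr_ge0 (\sum_i v i ^+ 2).
have := sqrtr_ge0 U; have := sqrtr_ge0 V.
move=> *; rewrite -mulrA.
apply: ler_pM => //; first exact: mulr_ge0.
apply: le_trans _ (sqrt_mul_le hU0 hV0); exact: ler_pM.
Qed.

Lemma zbil p q (M : 'M[R]_(p,q)) (c : R) (u : 'I_p -> R) (v : 'I_q -> R) :
  (forall i j, `|M i j| <= c) ->
  `| \sum_i \sum_j u i * M i j * v j | <= c * (\sum_i `|u i|) * (\sum_j `|v j|).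
Proof.
move=> hc; apply: (le_trans (ler_norm_sum _ _ _)).
rewrite [c * _]mulrC -mulrA mulr_suml; apply: ler_sum => i _.
apply: (le_trans (ler_norm_sum _ _ _)).
rewrite mulr_sumr mulr_sumr; apply: ler_sum => j _.
rewrite !normrM -mulrA; apply: ler_pM => //; rewrite ?mulr_ge0 //.
by apply: ler_pM.
Qed.

Lemma sum_ind n (A : {set 'I_n}) : \sum_i ((i \in A)%:R : R) = #|A|%:R.
Proof.
rewrite (eq_bigr (fun i => if i \in A then 1 else 0)); last by move=> i _; case: (i \in A).
by rewrite -big_mkcond sumr_const.
Qed.

Lemma sum_S n (S : {set 'I_n}) (f : 'I_n -> R) : (forall i, i \notin S -> f i = 0) ->
  \sum_i f i = \sum_(k < #|S|) f (enum_val k).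
Proof.
move=> h; rewrite (bigID (fun i => i \in S)) /= [X in _ + X]big1 ?addr0 //.
by rewrite big_enum_val.
Qed.

Lemma sum_S_le n (S : {set 'I_n}) (f : 'I_n -> R) : (forall i, 0 <= f i) ->
  \sum_(k < #|S|) f (enum_val k) <= \sum_i f i.
Proof.
move=> h; rewrite [X in _ <= X](bigID (fun i => i \in S)) /= -big_enum_val lerDl.
by apply: sumr_ge0.
Qed.

End H.

Lemma arith_big (R : realType) (P K gamma A1 A2 : R) :
  0 < P -> 10 ^+ 4 <= K -> 0 <= gamma <= 1 -> A1 <= P -> A2 <= P * 10 ^+ 7 ->
  10 * 10 ^- 6 * (K ^+ 2 * P) - gamma * P <= 10 ^- 6 * (A1 + A2) -> False.
Proof.
move=> P0 hK /andP[g0 g1] h1 h2 h.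
have KK : 10 ^+ 8 <= K ^+ 2.
  have := ler_pM (_ : 0 <= 10 ^+ 4) (_ : 0 <= 10 ^+ 4) hK hK.
  by rewrite -exprD -expr2; apply; rewrite exprn_ge0.
have h3 : 10 ^+ 8 * P <= K ^+ 2 * P by apply: ler_wpM2r => //; exact: ltW.
have h4 : gamma * P <= P.
  by have := ler_wpM2r (ltW P0) g1; rewrite mul1r.
lra.
Qed.

Lemma contra_big (R : realType) (n : nat) (S : {set 'I_n}) (Ahat F : 'M[R]_n)
  (lt2 : 'I_n -> R) (Y Z : 'M[R]_#|S|) (zeta d K gamma : R) :
  is_sign_vector lt2 -> 0 < zeta -> 0 < d -> 10 ^+ 4 <= K -> 0 <= gamma <= 1 ->
  0 < n%:R :> R -> 0 < #|S|%:R :> R -> #|S|%:R <= n%:R :> R ->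
  (forall k k' : 'I_#|S|, Ahat (enum_val k) (enum_val k') - F (enum_val k) (enum_val k') = Y k k' + Z k k') ->
  opnorm Y <= K * d ->
  (forall i j : 'I_#|S|, `|Z i j| <= K * d / (zeta * n%:R)) ->
  resolvable (submxSS S (hadamard (Ahat - F) (outer lt2)))
             (10 * d * K ^+ 3) (gamma * d * K) ->
  10 ^- 7 < zeta -> False.
Proof.
move=> hlt z0 d0 hK hg nR m0 mn hC hY hZ hres zbig.
set m := #|S| in m0 mn hC hY hZ hres *.
have sgn : forall i, lt2 i ^+ 2 = 1.
  by move=> i; case: (hlt i) => ->; rewrite ?expr1n ?sqrrN ?expr1n.
pose xr := fun _ : 'I_m => (10:R) ^- 6.
have hx : forall k, 0 <= xr k <= 1 by move=> k; rewrite /xr; apply/andP; split; lra.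
have hsx : \sum_k xr k <= 10 ^- 6 * m%:R by rewrite /xr sumr_const card_ord mulr_natr.
have := hres xr hx hsx.
set A1 := \sum_k \sum_k' lt2 (enum_val k) * Y k k' * lt2 (enum_val k').
set A2 := \sum_k \sum_k' lt2 (enum_val k) * Z k k' * lt2 (enum_val k').
have -> : frob (submxSS S (hadamard (Ahat - F) (outer lt2))) (rowmat xr) = 10 ^- 6 * (A1 + A2).
  rewrite /frob /A1 /A2 mulrDr !mulr_sumr -big_split; apply: eq_bigr => k _.
  rewrite !mulr_sumr -big_split; apply: eq_bigr => k' _.
  rewrite !mxE hC /xr /=; ring.
have ss : \sum_(k < m) lt2 (enum_val k) ^+ 2 <= m%:R.
  by rewrite (eq_bigr (fun _ => 1)) ?sumr_const ?card_ord // => k _; rewrite sgn.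
have hA1 := bil_le hY ss ss.
have hA2 := zbil (fun (k : 'I_m) => lt2 (enum_val k)) (fun (k : 'I_m) => lt2 (enum_val k)) hZ.
have sa : \sum_(k < m) `|lt2 (enum_val k)| = m%:R.
  rewrite (eq_bigr (fun _ => 1)) ?sumr_const ?card_ord // => k _.
  by case: (hlt (enum_val k)) => ->; rewrite ?normrN normr1.
rewrite sa -/A2 in hA2; rewrite -/A1 in hA1.
have P0 : 0 < K * d * m%:R by rewrite !mulr_gt0 //; lra.
set P := K * d * m%:R in P0 *.
have e1 : zeta * zeta^-1 = 1 by rewrite divff ?gt_eqF.
have iz0 : 0 < zeta^-1 by rewrite invr_gt0.
have iz : zeta^-1 <= 10 ^+ 7.
  have : 0 <= zeta^-1 * (zeta - 10 ^- 7) by apply: mulr_ge0; lra.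
  rewrite mulrBr mulrC e1; lra.
have mn1 : m%:R * n%:R^-1 <= 1 :> R.
  have : m%:R * n%:R^-1 <= n%:R * n%:R^-1 :> R by apply: ler_wpM2r => //; rewrite invr_ge0 ltW.
  by rewrite divff ?lt0r_neq0.
have eA2 : K * d / (zeta * n%:R) * m%:R * m%:R = P * ((m%:R * n%:R^-1) * zeta^-1).
  by rewrite /P invfM; ring.
have hmz : (m%:R * n%:R^-1) * zeta^-1 <= 10 ^+ 7.
  have : (m%:R * n%:R^-1) * zeta^-1 <= 1 * zeta^-1 by apply: ler_wpM2r; [exact: ltW | exact: mn1].
  lra.
have hA2' : A2 <= P * 10 ^+ 7.
  have := ler_norm A2; have := ler_wpM2l (ltW P0) hmz; lra.
have hA1' : A1 <= P.
  have := ler_norm A1; rewrite /P; lra.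
have e2 : 10 * d * K ^+ 3 * \sum_k xr k = 10 * 10 ^- 6 * (K ^+ 2 * P).
  by rewrite /xr sumr_const card_ord /P -mulr_natr; ring.
have e3 : gamma * d * K * m%:R = gamma * P by rewrite /P; ring.
rewrite e2 e3 => h.
exact: (arith_big P0 hK hg hA1' hA2' h).
Qed.

Lemma arith_tiny (R : realType) (q X b t : R) : 100 <= q -> 0 < b -> b / q <= X -> t < b * q / 10 ->
  20 * (q ^+ 4 * X) <= 10 * (q ^+ 2 * b) + 4 * b + 5 * t -> False.
Proof.
move=> q1 b0 hX ht h.
have q0 : 0 < q by lra.
have e : q ^+ 4 * (b / q) = q ^+ 3 * b by rewrite [q ^+ 4]exprSr; field; rewrite gt_eqF.
have h1 : q ^+ 3 * b <= q ^+ 4 * X by rewrite -e; apply: ler_wpM2l => //; rewrite exprn_ge0 // ltW.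
have qq : 0 <= q - 100 by lra.
have b0' := ltW b0; have q0' := ltW q0.
have f1 : 0 <= (q - 100) * (q ^+ 2 * b) by apply: mulr_ge0 => //; apply: mulr_ge0 => //; exact: exprn_ge0.
have f2 : 0 <= (q - 100) * (q * b) by apply: mulr_ge0 => //; apply: mulr_ge0.
have f3 : 0 <= (q - 100) * b by apply: mulr_ge0.
have g1 : (q - 100) * (q ^+ 2 * b) = q ^+ 3 * b - 100 * (q ^+ 2 * b) by ring.
have g2 : (q - 100) * (q * b) = q ^+ 2 * b - 100 * (q * b) by ring.
have g3 : (q - 100) * b = q * b - 100 * b by ring.
rewrite g1 in f1; rewrite g2 in f2; rewrite g3 in f3.
have e2 : b * q / 10 = (q * b) / 10 by rewrite (mulrC b q).
lra.
Qed.

Section Tiny.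
Variables (R : realType) (n : nat) (S : {set 'I_n}) (Ahat F : 'M[R]_n) (l lt2 : 'I_n -> R)
  (Y Z : 'M[R]_#|S|) (w : 'I_n -> R) (W N : 'M[R]_n) (B : {set 'I_n}).

Definition xB (i : 'I_n) : R := (i \in B)%:R.
Definition G := [set j in S | l j == lt2 j].
Definition Nx : 'M[R]_n := \matrix_(i, j) (xB i * (j \notin G)%:R).
Definition ak (k : 'I_#|S|) := xB (enum_val k).
Definition sk (k : 'I_#|S|) := lt2 (enum_val k).
Definition gk (k : 'I_#|S|) : R := (enum_val k \in G)%:R.
Definition hk (k : 'I_#|S|) : R := (l (enum_val k) != lt2 (enum_val k))%:R.
Definition CC (k k' : 'I_#|S|) := Y k k' + Z k k'.

Hypothesis hl : is_sign_vector l.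
Hypothesis hlt : is_sign_vector lt2.
Hypothesis BS : forall i, i \in B -> i \in S.
Hypothesis Bdis : forall i, i \in B -> l i != lt2 i.
Hypothesis hC : forall k k' : 'I_#|S|,
  Ahat (enum_val k) (enum_val k') - F (enum_val k) (enum_val k') = Y k k' + Z k k'.
Hypothesis hF : forall k k' : 'I_#|S|,
  0 <= F (enum_val k) (enum_val k') * (lt2 (enum_val k) * lt2 (enum_val k')).
Hypothesis hW0 : forall i j, 0 <= W i j.

Lemma sign_neq (x y : R) : (x = 1 \/ x = -1) -> (y = 1 \/ y = -1) -> x != y -> x = - y.
Proof. by case=> ->; case=> ->; rewrite ?eqxx //; rewrite ?opprK. Qed.

Lemma lhs_le :
  frob (hadamard (hadamard Ahat (outer l)) W) (rowmat xB - Nx) <=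
  \sum_k \sum_k' - (ak k * gk k' * CC k k' * (sk k * sk k') * W (enum_val k) (enum_val k')).
Proof.
rewrite /frob (sum_S (S := S)); last first.
  move=> i iS; rewrite big1 // => j _; rewrite !mxE /xB.
  have -> : (i \in B) = false by apply/negP => /BS; rewrite (negbTE iS).
  by rewrite mul0r subrr mulr0.
apply: ler_sum => k _; rewrite (sum_S (S := S)); last first.
  move=> j jS; rewrite !mxE (_ : j \notin G); first by rewrite mulr1 subrr mulr0.
  by rewrite /G inE (negbTE jS).
apply: ler_sum => k' _; rewrite !mxE /ak /gk /CC /sk.
have := hC k k'; have := hF k k'; have := hW0 (enum_val k) (enum_val k').
set i := enum_val k; set j := enum_val k'.
rewrite /xB.
case: (boolP (i \in B)) => iB; last by move=> * /=; rewrite !(mulr1n, mulr0n, mul0r, mulr0, mul1r, mulr1, subrr, oppr0).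
case: (boolP (j \in G)) => jG; last by move=> * /=; rewrite !(mulr1n, mulr0n, mul0r, mulr0, mul1r, mulr1, subrr, oppr0).
have lj : l j = lt2 j by move: jG; rewrite /G inE => /andP[_ /eqP].
have li : l i = - lt2 i := sign_neq (hl i) (hlt i) (Bdis iB).
rewrite /= ?(mulr1n, mulr0n, mul0r, mulr0, mul1r, mulr1, subr0) li lj => w0 f0 c0.
have -> : Ahat i j = F i j + (Y k k' + Z k k') by rewrite -c0; ring.
set f := F i j * _ in f0; have : 0 <= f * W i j by apply: mulr_ge0.
rewrite /f; move: (Y k k' + Z k k') => c ff.
nra.
Qed.


Definition ww (k : 'I_#|S|) := w (enum_val k).
Definition xr (k : 'I_#|S|) := ak k * (1 - ww k).
Definition Nk (k k' : 'I_#|S|) := N (enum_val k) (enum_val k').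

Hypothesis hWd : forall i j, W i j = 1 - w i - w j + N i j.
Hypothesis hw : forall i, 0 <= w i <= 1.

Lemma ghk k : gk k = 1 - hk k.
Proof.
rewrite /gk /hk /G inE enum_valP /=.
by case: (l (enum_val k) == lt2 (enum_val k)); rewrite /= ?subr0 ?subrr.
Qed.

Lemma ak01 k : ak k = 0 \/ ak k = 1.
Proof. by rewrite /ak /xB; case: (enum_val k \in B); [right|left]. Qed.
Lemma hk01 k : hk k = 0 \/ hk k = 1.
Proof. by rewrite /hk; case: (_ != _); [right|left]. Qed.
Lemma gk01 k : gk k = 0 \/ gk k = 1.
Proof. by rewrite /gk; case: (_ \in _); [right|left]. Qed.
Lemma sk2 k : sk k ^+ 2 = 1.
Proof. by rewrite /sk; case: (hlt (enum_val k)) => ->; rewrite ?sqrrN expr1n. Qed.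
Lemma skn k : `|sk k| = 1.
Proof. by rewrite /sk; case: (hlt (enum_val k)) => ->; rewrite ?normrN normr1. Qed.

Lemma sum4 (p : nat) (f1 f2 f3 f4 : 'I_p -> 'I_p -> R) :
  \sum_k \sum_k' (- f1 k k' + f2 k k' + f3 k k' - f4 k k') =
  - (\sum_k \sum_k' f1 k k') + \sum_k \sum_k' f2 k k' + \sum_k \sum_k' f3 k k' - \sum_k \sum_k' f4 k k'.
Proof.
under eq_bigr => k _ do rewrite sumrB !big_split /= sumrN.
by rewrite sumrB !big_split /= sumrN.
Qed.

Lemma decomp :
  \sum_k \sum_k' - (ak k * gk k' * CC k k' * (sk k * sk k') * W (enum_val k) (enum_val k')) =
  - (\sum_k \sum_k' CC k k' * (sk k * sk k') * xr k)
  + \sum_k \sum_k' (xr k * sk k) * CC k k' * (hk k' * sk k')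
  + \sum_k \sum_k' (ak k * sk k) * CC k k' * (gk k' * ww k' * sk k')
  - \sum_k \sum_k' (ak k * gk k' * sk k * sk k') * CC k k' * Nk k k'.
Proof.
rewrite -sum4; apply: eq_bigr => k _; apply: eq_bigr => k' _.
rewrite hWd /xr /Nk /ww ghk; ring.
Qed.


Lemma notS_notB i : i \notin S -> (i \in B) = false.
Proof. by move=> iS; apply/negP => /BS; rewrite (negbTE iS). Qed.

Lemma sum_ak : \sum_k ak k = #|B|%:R.
Proof.
rewrite -(@sum_ind R _ B) (sum_S (S := S)) //.
by move=> i iS; rewrite notS_notB.
Qed.

Lemma sum_xr : \sum_k xr k = \sum_i xB i * (1 - w i).
Proof.
rewrite (sum_S (S := S)) //.
by move=> i iS; rewrite /xB notS_notB // mul0r.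
Qed.

Lemma sum_hk : \sum_k hk k <= \sum_i ((l i != lt2 i)%:R : R).
Proof. by apply: (@sum_S_le R n S (fun i => ((l i != lt2 i)%:R : R))) => i; rewrite ler0n. Qed.

Lemma sum_ww : \sum_k ww k <= \sum_i w i.
Proof. by apply: (@sum_S_le R n S w) => i; case/andP: (hw i). Qed.

Lemma xr_bounds k : 0 <= xr k <= ak k.
Proof.
rewrite /xr; have := hw (enum_val k); rewrite /ww => /andP[w0 w1].
by case: (ak01 k) => ->; rewrite ?mul0r ?lexx // mul1r; apply/andP; split; lra.
Qed.

Lemma ww_bounds k : 0 <= ww k <= 1.
Proof. exact: hw. Qed.

Lemma split_bil (u v : 'I_#|S| -> R) :
  \sum_k \sum_k' u k * CC k k' * v k' =
  \sum_k \sum_k' u k * Y k k' * v k' + \sum_k \sum_k' u k * Z k k' * v k'.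
Proof.
rewrite -big_split; apply: eq_bigr => k _; rewrite -big_split; apply: eq_bigr => k' _.
by rewrite /CC /=; ring.
Qed.

Lemma bound_bil (D c U V A1 A2 : R) (u v : 'I_#|S| -> R) :
  opnorm Y <= D -> (forall k k', `|Z k k'| <= c) -> 0 <= c ->
  \sum_k u k ^+ 2 <= U -> \sum_k v k ^+ 2 <= V ->
  \sum_k `|u k| <= A1 -> \sum_k `|v k| <= A2 ->
  \sum_k \sum_k' u k * CC k k' * v k' <= D * ((U + V) / 2) + c * A1 * A2.
Proof.
move=> hY hZ c0 hU hV hA1 hA2; rewrite split_bil.
have h1 := bil_le hY hU hV; have h2 := zbil u v hZ.
have h3 : c * (\sum_k `|u k|) * (\sum_k `|v k|) <= c * A1 * A2.
  have su : 0 <= \sum_k `|u k| by apply: sumr_ge0.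
  have sv : 0 <= \sum_k `|v k| by apply: sumr_ge0.
  by apply: ler_pM; [exact: mulr_ge0 | exact: sv | exact: ler_wpM2l | exact: hA2].
have := ler_norm (\sum_k \sum_k' u k * Y k k' * v k').
have := ler_norm (\sum_k \sum_k' u k * Z k k' * v k').
lra.
Qed.


Lemma T1_frob : \sum_k \sum_k' CC k k' * (sk k * sk k') * xr k =
  frob (submxSS S (hadamard (Ahat - F) (outer lt2))) (rowmat xr).
Proof.
rewrite /frob; apply: eq_bigr => k _; apply: eq_bigr => k' _.
by rewrite !mxE hC /CC /sk.
Qed.

Hypothesis hN0 : forall i j, 0 <= N i j.

Lemma agss_le1 k k' : `|ak k * gk k' * sk k * sk k'| <= 1.
Proof.
rewrite !normrM !skn !mulr1.
by case: (ak01 k) => ->; case: (gk01 k') => ->; rewrite ?normr0 ?normr1 ?mulr0 ?mul0r ?mulr1.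
Qed.

Lemma sumN_le : \sum_k \sum_k' Nk k k' <= \sum_i \sum_j N i j.
Proof.
apply: (@le_trans _ _ (\sum_k \sum_j N (enum_val k) j)).
  apply: ler_sum => k _; apply: (@sum_S_le R n S (fun j => N (enum_val k) j)) => j.
  exact: hN0.
apply: (@sum_S_le R n S (fun i => \sum_j N i j)) => i.
by apply: sumr_ge0 => j _.
Qed.

Lemma T4Z (c : R) : 0 <= c -> (forall k k', `|Z k k'| <= c) ->
  `| \sum_k \sum_k' (ak k * gk k' * sk k * sk k') * Z k k' * Nk k k' | <=
  c * \sum_i \sum_j N i j.
Proof.
move=> c0 hZ.
apply: (le_trans (ler_norm_sum _ _ _)).
apply: (@le_trans _ _ (\sum_k \sum_k' c * Nk k k')).
  apply: ler_sum => k _; apply: (le_trans (ler_norm_sum _ _ _)); apply: ler_sum => k' _.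
  have := agss_le1 k k'; set a := ak k * gk k' * sk k * sk k' => ha.
  rewrite !normrM (ger0_norm (hN0 _ _)).
  apply: ler_wpM2r; first exact: hN0.
  rewrite -[c]mul1r; apply: ler_pM => //; [by rewrite !mulr_ge0 | by rewrite -!normrM; exact: agss_le1].
under eq_bigr do rewrite -mulr_sumr.
rewrite -mulr_sumr; apply: ler_wpM2l => //; exact: sumN_le.
Qed.


Lemma sum2_S (f : 'I_n -> 'I_n -> R) :
  (forall i j, (i \notin S) || (j \notin S) -> f i j = 0) ->
  \sum_i \sum_j f i j = \sum_(k < #|S|) \sum_(k' < #|S|) f (enum_val k) (enum_val k').
Proof.
move=> h; rewrite (sum_S (S := S)); last first.
  by move=> i iS; rewrite big1 // => j _; rewrite h // iS.
apply: eq_bigr => k _; rewrite (sum_S (S := S)) // => j jS.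
by rewrite h // jS orbT.
Qed.

Lemma tracenorm_ge0 : 0 <= tracenorm N.
Proof.
have h : opnorm (0 : 'M[R]_n) <= 1.
  apply: opnorm_le => u v _ _; rewrite big1 ?normr0 ?ler01 // => i _.
  by rewrite big1 // => j _; rewrite mxE mulr0 mul0r.
have := tracenorm_ge N h; rewrite /frob big1 // => i _.
by rewrite big1 // => j _; rewrite mxE mulr0.
Qed.

Lemma T4Y (D T : R) : 0 < D -> opnorm Y <= D -> tracenorm N <= T ->
  - (\sum_k \sum_k' (ak k * gk k' * sk k * sk k') * Y k k' * Nk k k') <= D * T.
Proof.
move=> D0 hY hT.
have T0 : 0 <= T := le_trans tracenorm_ge0 hT.
case: (posnP #|S|) => [S0|Sp].
  rewrite big1; first by rewrite oppr0 mulr_ge0 // ltW.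
  by move=> k _; exfalso; have := ltn_ord k; move: (nat_of_ord k) => kk; rewrite S0.
have x0S : enum_val (Ordinal Sp) \in S by exact: enum_valP.
pose rk := enum_rank_in x0S.
pose f k k' := ak k * gk k' * sk k * sk k' * Y k k'.
pose Bm : 'M[R]_n := \matrix_(i, j) (if (i \in S) && (j \in S) then - f (rk i) (rk j) / D else 0).
have hfrob : frob N Bm = - (\sum_k \sum_k' (ak k * gk k' * sk k * sk k') * Y k k' * Nk k k') / D.
  rewrite /frob sum2_S; last first.
    by move=> i j /orP[] /negbTE h; rewrite mxE h ?andbF mulr0.
  rewrite mulNr mulr_suml -sumrN; apply: eq_bigr => k _.
  rewrite mulr_suml -sumrN; apply: eq_bigr => k' _.
  rewrite mxE !enum_valP /= /rk !enum_valK_in /f /Nk; field.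
  by rewrite gt_eqF.
have hop : opnorm Bm <= 1.
  apply: opnorm_le => u v hu hv.
  rewrite sum2_S; last first.
    by move=> i j /orP[] /negbTE h; rewrite mxE h ?andbF mulr0 mul0r.
  have -> : \sum_(k < #|S|) \sum_(k' < #|S|) u (enum_val k) * Bm (enum_val k) (enum_val k') * v (enum_val k') =
    - (\sum_k \sum_k' (u (enum_val k) * ak k * sk k) * Y k k' * (v (enum_val k') * gk k' * sk k')) / D.
    rewrite mulNr mulr_suml -sumrN; apply: eq_bigr => k _.
    rewrite mulr_suml -sumrN; apply: eq_bigr => k' _.
    rewrite mxE !enum_valP /= /rk !enum_valK_in /f; field.
    by rewrite gt_eqF.
  have hu' : \sum_k (u (enum_val k) * ak k * sk k) ^+ 2 <= 1.
    apply: le_trans hu; apply: le_trans (@sum_S_le R n S (fun i => u i ^+ 2) _) => //.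
      apply: ler_sum => k _; rewrite !exprMn sk2 mulr1 -[X in _ <= X]mulr1.
      apply: ler_wpM2l; first exact: sqr_ge0.
      by case: (ak01 k) => ->; rewrite ?expr0n ?expr1n ?ler01.
    by move=> i; exact: sqr_ge0.
  have hv' : \sum_k (v (enum_val k) * gk k * sk k) ^+ 2 <= 1.
    apply: le_trans hv; apply: le_trans (@sum_S_le R n S (fun i => v i ^+ 2) _) => //.
      apply: ler_sum => k _; rewrite !exprMn sk2 mulr1 -[X in _ <= X]mulr1.
      apply: ler_wpM2l; first exact: sqr_ge0.
      by case: (gk01 k) => ->; rewrite ?expr0n ?expr1n ?ler01.
    by move=> i; exact: sqr_ge0.
  have := bil_le hY hu' hv'.
  set X := \sum_k _ => hX.
  rewrite normrM normrN normfV (gtr0_norm D0) ler_pdivrMr // mul1r.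
  by apply: le_trans hX _; rewrite -[X in _ <= X]mulr1; apply: ler_wpM2l; lra.
have := le_trans (tracenorm_ge N hop) hT; rewrite hfrob.
by rewrite ler_pdivrMr // mulrC.
Qed.


Lemma upper (D c d1 d2 theta rho : R) :
  0 < D -> opnorm Y <= D -> 0 <= c -> (forall k k', `|Z k k'| <= c) ->
  tracenorm N <= rho * n%:R -> \sum_i \sum_j N i j <= rho ^+ 2 * n%:R ^+ 2 ->
  resolvable (submxSS S (hadamard (Ahat - F) (outer lt2))) d1 d2 ->
  #|B|%:R <= 10 ^- 6 * #|S|%:R :> R ->
  \sum_i ((l i != lt2 i)%:R : R) <= theta * n%:R ->
  \sum_i w i <= rho * n%:R ->
  frob (hadamard (hadamard Ahat (outer l)) W) (rowmat xB - Nx) <=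
  - (d1 * (\sum_i xB i * (1 - w i)) - d2 * #|S|%:R)
  + (D * ((#|B|%:R + theta * n%:R) / 2) + c * #|B|%:R * (theta * n%:R))
  + (D * ((#|B|%:R + rho * n%:R) / 2) + c * #|B|%:R * (rho * n%:R))
  + (D * (rho * n%:R) + c * (rho ^+ 2 * n%:R ^+ 2)).
Proof.
move=> D0 hY c0 hZ hT hNs hres hsm hdis hsw.
apply: (le_trans lhs_le); rewrite decomp.
have sa := sum_ak; have sx := sum_xr.
have xrb := xr_bounds.
have h1 : d1 * (\sum_i xB i * (1 - w i)) - d2 * #|S|%:R <=
    \sum_k \sum_k' CC k k' * (sk k * sk k') * xr k.
  rewrite T1_frob -sx; apply: hres.
    move=> k; have /andP[x0 x1] := xrb k; rewrite x0 /=.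
    by apply: le_trans x1 _; case: (ak01 k) => ->; rewrite ?ler01.
  apply: le_trans hsm; rewrite -sa; apply: ler_sum => k _.
  by case/andP: (xrb k).
have h2 : \sum_k \sum_k' (xr k * sk k) * CC k k' * (hk k' * sk k') <=
    D * ((#|B|%:R + theta * n%:R) / 2) + c * #|B|%:R * (theta * n%:R).
  apply: bound_bil => //.
  - rewrite -sa; apply: ler_sum => k _; rewrite exprMn sk2 mulr1.
    have /andP[x0 x1] := xrb k.
    by case: (ak01 k) => e; rewrite e in x1 *; [have -> : xr k = 0 by apply/eqP; rewrite eq_le x1 x0|]; rewrite ?expr0n // expr2 -[X in _ <= X]mulr1 ler_pM.
  - apply: le_trans hdis; apply: le_trans sum_hk; apply: ler_sum => k _.
    rewrite exprMn sk2 mulr1; by case: (hk01 k) => ->; rewrite ?expr0n ?expr1n.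
  - rewrite -sa; apply: ler_sum => k _; rewrite normrM skn mulr1.
    by have /andP[x0 x1] := xrb k; rewrite ger0_norm.
  - apply: le_trans hdis; apply: le_trans sum_hk; apply: ler_sum => k _.
    rewrite normrM skn mulr1; by case: (hk01 k) => ->; rewrite ?normr0 ?normr1.
have h3 : \sum_k \sum_k' (ak k * sk k) * CC k k' * (gk k' * ww k' * sk k') <=
    D * ((#|B|%:R + rho * n%:R) / 2) + c * #|B|%:R * (rho * n%:R).
  apply: bound_bil => //.
  - rewrite -sa; apply: ler_sum => k _; rewrite exprMn sk2 mulr1.
    by case: (ak01 k) => ->; rewrite ?expr0n ?expr1n.
  - apply: le_trans hsw; apply: le_trans sum_ww; apply: ler_sum => k _.
    rewrite !exprMn sk2 mulr1; have /andP[w0 w1] := ww_bounds k.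
    by case: (gk01 k) => ->; rewrite ?expr0n ?expr1n ?mul0r ?mul1r // expr2 -[X in _ <= X]mul1r ler_pM.
  - rewrite -sa; apply: ler_sum => k _; rewrite normrM skn mulr1.
    by case: (ak01 k) => ->; rewrite ?normr0 ?normr1.
  - apply: le_trans hsw; apply: le_trans sum_ww; apply: ler_sum => k _.
    rewrite !normrM skn mulr1; have /andP[w0 w1] := ww_bounds k.
    by case: (gk01 k) => ->; rewrite ?normr0 ?normr1 ?mul0r ?mul1r // ger0_norm.
have h4 : - (\sum_k \sum_k' (ak k * gk k' * sk k * sk k') * CC k k' * Nk k k') <=
    D * (rho * n%:R) + c * (rho ^+ 2 * n%:R ^+ 2).
  have -> : \sum_k \sum_k' (ak k * gk k' * sk k * sk k') * CC k k' * Nk k k' =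
    \sum_k \sum_k' (ak k * gk k' * sk k * sk k') * Y k k' * Nk k k' +
    \sum_k \sum_k' (ak k * gk k' * sk k * sk k') * Z k k' * Nk k k'.
    rewrite -big_split; apply: eq_bigr => k _; rewrite -big_split; apply: eq_bigr => k' _.
    by rewrite /CC /=; ring.
  have hy := T4Y D0 hY hT.
  have hz := T4Z c0 hZ.
  have hz' : c * \sum_i \sum_j N i j <= c * (rho ^+ 2 * n%:R ^+ 2) by apply: ler_wpM2l.
  have := ler_norm (- \sum_k \sum_k' (ak k * gk k' * sk k * sk k') * Z k k' * Nk k k').
  rewrite normrN; lra.
lra.
Qed.


Lemma xB01 i : xB i = 0 \/ xB i = 1.
Proof. by rewrite /xB; case: (i \in B); [right|left]. Qed.

Lemma sum_notG : \sum_j ((j \notin G)%:R : R) = #|~: G|%:R.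
Proof. by rewrite -(@sum_ind R _ (~: G)); apply: eq_bigr => j _; rewrite !inE. Qed.

Lemma rowsel_ok (K rho' : R) : 0 <= K -> 0 <= rho' -> rho' * n%:R = #|B|%:R ->
  #|~: G|%:R <= K * #|B|%:R -> rowsel rho' (K * rho') (rowmat xB - Nx) xB.
Proof.
move=> K0 r0 hr hG.
have sB : \sum_i xB i = #|B|%:R by rewrite -(@sum_ind R _ B).
have b0 : 0 <= #|B|%:R :> R by rewrite ler0n.
split.
  move=> i j; rewrite !mxE.
  by case: (xB01 i) => ->; case: (j \notin G); rewrite /= ?(mulr1n, mulr0n, mul0r, mulr0, mul1r, mulr1, subrr, subr0, lexx, ler01).
split.
  by move=> i; case: (xB01 i) => ->; rewrite ?lexx ?ler01.
split; first by rewrite sB hr.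
exists Nx; split => //.
have x0 : 0 <= rho' * (K * rho') by rewrite !mulr_ge0.
have e : Num.sqrt (rho' * (K * rho')) ^+ 2 * n%:R ^+ 2 = K * #|B|%:R ^+ 2.
  by rewrite sqr_sqrtr // -hr; ring.
split.
  move=> i j; rewrite !mxE.
  by case: (xB01 i) => ->; case: (j \notin G); rewrite /= ?(mulr1n, mulr0n, mul0r, mulr0, mul1r, mulr1, subrr, subr0, lexx, ler01).
split.
  rewrite e.
  have -> : \sum_i \sum_j `|Nx i j| = #|B|%:R * #|~: G|%:R.
    rewrite -sB -sum_notG mulr_suml; apply: eq_bigr => i _; rewrite mulr_sumr.
    apply: eq_bigr => j _; rewrite mxE ger0_norm //.
    by case: (xB01 i) => ->; case: (j \notin G); rewrite /= ?(mulr1n, mulr0n, mul0r, mulr0, mul1r, mulr1, subrr, subr0, lexx, ler01).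
  rewrite expr2 mulrA [K * _]mulrC -mulrA; apply: ler_wpM2l => //.
apply: tracenorm_le => B' hB'.
have -> : frob Nx B' = \sum_i \sum_j xB i * B' i j * (j \notin G)%:R.
  by apply: eq_bigr => i _; apply: eq_bigr => j _; rewrite mxE; ring.
apply: le_trans (ler_norm _) _; apply: le_trans (opnorm_bil _ _ _) _.
have -> : \sum_i xB i ^+ 2 = #|B|%:R.
  by rewrite -sB; apply: eq_bigr => i _; case: (xB01 i) => ->; rewrite ?expr0n ?expr1n.
have -> : \sum_j ((j \notin G)%:R : R) ^+ 2 = #|~: G|%:R.
  by rewrite -sum_notG; apply: eq_bigr => j _; case: (j \notin G); rewrite /= ?(mulr1n, mulr0n, expr0n, expr1n).
have -> : Num.sqrt (rho' * (K * rho')) * n%:R = Num.sqrt (K * #|B|%:R ^+ 2).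
  by rewrite -e -exprMn sqrtr_sqr ger0_norm // mulr_ge0 ?sqrtr_ge0 ?ler0n.
have g0 : 0 <= #|~: G|%:R :> R by rewrite ler0n.
apply: (@le_trans _ _ (Num.sqrt (#|B|%:R * #|~: G|%:R))).
  rewrite sqrtrM // -[X in _ <= X]mul1r -mulrA; apply: ler_wpM2r => //.
  by rewrite mulr_ge0 ?sqrtr_ge0.
rewrite ler_sqrt; last by rewrite mulr_ge0 ?exprn_ge0.
by rewrite expr2 mulrA [K * _]mulrC -mulrA; apply: ler_wpM2l.
Qed.


Lemma notG_le j : ((j \notin G)%:R : R) <= (j \notin S)%:R + (l j != lt2 j)%:R.
Proof.
rewrite /G inE negb_and.
by case: (j \in S); case: (l j == lt2 j) => /=; rewrite ?(mulr1n, mulr0n, addr0, add0r, lexx, ler01) //; lra.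
Qed.

Lemma card_notG (theta gamma : R) :
  (1 - gamma) * n%:R <= #|S|%:R -> \sum_i ((l i != lt2 i)%:R : R) <= theta * n%:R ->
  #|~: G|%:R <= (theta + gamma) * n%:R.
Proof.
move=> hS hd; rewrite -sum_notG.
apply: le_trans (ler_sum _ (fun j _ => notG_le j)) _.
rewrite big_split /=.
have -> : \sum_j ((j \notin S)%:R : R) = #|~: S|%:R.
  by rewrite -(@sum_ind R _ (~: S)); apply: eq_bigr => j _; rewrite !inE.
have : #|~: S|%:R + #|S|%:R = n%:R :> R by rewrite -natrD addnC cardsC card_ord.
lra.
Qed.

Lemma b_le_dis : #|B|%:R <= \sum_i ((l i != lt2 i)%:R : R).
Proof.
rewrite -(@sum_ind R _ B); apply: ler_sum => i _.
by case: (boolP (i \in B)) => [/Bdis ->|_]; rewrite /= ?lexx ?ler0n.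
Qed.

End Tiny.

Lemma contra_tiny (R : realType) (n : nat) (S : {set 'I_n}) (Ahat F : 'M[R]_n) (l lt2 : 'I_n -> R)
  (Y Z : 'M[R]_#|S|) (w : 'I_n -> R) (W N : 'M[R]_n) (B : {set 'I_n})
  (zeta d K theta gamma rho : R) :
  is_sign_vector l -> is_sign_vector lt2 ->
  (forall i, i \in B -> i \in S) -> (forall i, i \in B -> l i != lt2 i) ->
  (forall k k' : 'I_#|S|,
    Ahat (enum_val k) (enum_val k') - F (enum_val k) (enum_val k') = Y k k' + Z k k') ->
  (forall k k' : 'I_#|S|,
    0 <= F (enum_val k) (enum_val k') * (lt2 (enum_val k) * lt2 (enum_val k'))) ->
  (forall i j, 0 <= W i j) -> (forall i j, W i j = 1 - w i - w j + N i j) ->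
  (forall i, 0 <= w i <= 1) -> (forall i j, 0 <= N i j) ->
  0 < n%:R :> R -> 0 < zeta -> zeta <= 10 ^- 7 -> 0 < d -> 10 ^+ 4 <= K ->
  0 <= theta -> theta <= zeta -> 0 <= gamma -> gamma <= zeta -> 0 <= rho -> rho <= theta + gamma ->
  (forall i, i \in B -> w i <= 1 - (Num.sqrt K)^-1) ->
  \sum_i ((l i != lt2 i)%:R : R) <= theta * n%:R ->
  (1 - gamma) * n%:R <= #|S|%:R -> #|S|%:R <= n%:R :> R ->
  opnorm Y <= K * d ->
  (forall i j : 'I_#|S|, `|Z i j| <= K * d / (zeta * n%:R)) ->
  resolvable (submxSS S (hadamard (Ahat - F) (outer lt2))) (10 * d * K ^+ 3) (gamma * d * K) ->
  pseudorect rho N -> \sum_i w i <= rho * n%:R ->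
  (forall (rho' : R) (M : 'M[R]_n) (x : 'I_n -> R),
     rho / K <= rho' <= zeta ->
     rowsel rho' (K * rho') M x ->
     frob (hadamard (hadamard Ahat (outer l)) W) M >=
       10 * d * K ^+ 2 * (K * (\sum_i x i * (1 - w i)) - rho' * n%:R)) ->
  10 * (theta + gamma) * n%:R / Num.sqrt K < #|B|%:R -> False.
Proof.
move=> hl hlt BS Bdis hC hF hW0 hWd hw hN0 nR z0 ztiny d0 hK th0 thz ga0 gaz r0 hrho Bw hdis hSc mn hY hZ hres [hNe [hNs hNt]] hsw hcon hb.
set b : R := #|B|%:R in hb *.
set q := Num.sqrt K in Bw hb.
set t := (theta + gamma) * n%:R.
have K0 : 0 < K by lra.
have qK : q ^+ 2 = K by rewrite sqr_sqrtr // ltW.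
have q100 : 100 <= q.
  have : Num.sqrt (100 ^+ 2) <= q by rewrite ler_sqrt //; lra.
  by rewrite sqrtr_sqr ger0_norm //; lra.
have q0 : 0 < q by lra.
have t0 : 0 <= t by rewrite /t mulr_ge0 //; lra.
have hbt : t < b * q / 10.
  have e : 10 * (theta + gamma) * n%:R / q * q = 10 * (theta + gamma) * n%:R.
    by rewrite divfK ?gt_eqF.
  rewrite -subr_gt0 in hb.
  have := mulr_gt0 hb q0; rewrite mulrBl e /t; lra.
have bq : 0 < b * q by lra.
have b0 : 0 < b by move: bq; rewrite pmulr_lgt0.
have bdis : b <= theta * n%:R := le_trans (b_le_dis Bdis) hdis.
have hGc := card_notG hSc hdis.
have qleK : q <= K.
  have : 0 <= q * (q - 1) by apply: mulr_ge0; lra.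
  rewrite mulrBr mulr1 -expr2 qK; lra.
have tKb : t <= K * b.
  have : b * q <= b * K by apply: ler_wpM2l; lra.
  rewrite [K * b]mulrC; lra.
set rp := b / n%:R.
have rpn : rp * n%:R = b by rewrite /rp divfK // gt_eqF.
have rp0 : 0 <= rp by rewrite /rp divr_ge0 // ?ltW.
have hrs := @rowsel_ok R n S l lt2 B K rp (ltW K0) rp0 rpn (le_trans hGc tKb).
have tn : t = theta * n%:R + gamma * n%:R by rewrite /t mulrDl.
have hrn : rho * n%:R <= t by rewrite /t; apply: ler_wpM2r => //; exact: ltW.
have hrange : rho / K <= rp <= zeta.
  apply/andP; split.
    rewrite -(ler_pM2r (mulr_gt0 K0 nR)).
    have -> : rho / K * (K * n%:R) = rho * n%:R by field; rewrite gt_eqF.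
    have -> : rp * (K * n%:R) = K * b by rewrite -rpn; ring.
    lra.
  rewrite -(ler_pM2r nR) rpn.
  apply: le_trans bdis _; apply: ler_wpM2r => //; exact: ltW.
have LB := hcon rp _ (@xB R n B) hrange hrs.
rewrite rpn in LB.
have E0 : 0 < K * d by rewrite mulr_gt0.
set c := K * d / (zeta * n%:R) in hZ.
have zn0 : 0 < zeta * n%:R by rewrite mulr_gt0.
have cz : c * (zeta * n%:R) = K * d by rewrite /c divfK // gt_eqF.
have c0 : 0 <= c by rewrite /c divr_ge0 // ltW.
have hNs' : \sum_i \sum_j N i j <= rho ^+ 2 * n%:R ^+ 2.
  apply: le_trans hNs; apply: ler_sum => i _; apply: ler_sum => j _.
  by rewrite ger0_norm //; case/andP: (hNe i j).
have thn : theta * n%:R <= zeta * n%:R by apply: ler_wpM2r => //; exact: ltW.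
have gan : gamma * n%:R <= zeta * n%:R by apply: ler_wpM2r => //; exact: ltW.
have zn7 : zeta * n%:R <= 10 ^- 7 * n%:R by apply: ler_wpM2r => //; exact: ltW.
have gm : gamma * #|S|%:R <= gamma * n%:R by apply: ler_wpM2l.
have hsm : b <= 10 ^- 6 * #|S|%:R.
  have : (1 - gamma) * n%:R = n%:R - gamma * n%:R by ring.
  lra.
have UB := upper hl hlt BS Bdis hC hF hW0 hWd hw hN0 E0 hY c0 hZ hNt hNs' hres hsm hdis hsw.
set X := \sum_i @xB R n B i * (1 - w i) in LB UB.
have hX : b / q <= X.
  rewrite /X /b -(@sum_ind R _ B) mulr_suml; apply: ler_sum => i _.
  rewrite /xB; case: (boolP (i \in B)) => iB; rewrite /= ?(mulr1n, mulr0n, mul0r, mul1r) //.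
  have := Bw i iB; lra.
have c1 : c * (theta * n%:R) <= K * d by rewrite -cz; apply: ler_wpM2l.
have c2 : c * (rho * n%:R) <= 2 * (K * d).
  rewrite -cz; have : rho * n%:R <= 2 * (zeta * n%:R) by lra.
  move/(ler_wpM2l c0); lra.
have c1' : c * b * (theta * n%:R) <= (K * d) * b.
  by rewrite -mulrA mulrCA [X in _ <= X]mulrC; apply: ler_wpM2l; lra.
have c2' : c * b * (rho * n%:R) <= 2 * (K * d) * b.
  by rewrite -mulrA mulrCA [X in _ <= X]mulrC; apply: ler_wpM2l; lra.
have rn0 : 0 <= rho * n%:R by rewrite mulr_ge0 // ltW.
have c3 : c * (rho ^+ 2 * n%:R ^+ 2) <= 2 * (K * d) * (rho * n%:R).
  have -> : c * (rho ^+ 2 * n%:R ^+ 2) = (c * (rho * n%:R)) * (rho * n%:R) by ring.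
  by apply: ler_wpM2r.
have key : (K * d) * (20 * (K ^+ 2 * X)) <= (K * d) * (10 * (K * b) + gamma * #|S|%:R + 4 * b + 4 * t).
  have thle : theta * n%:R <= t.
    have : 0 <= gamma * n%:R by apply: mulr_ge0; [exact: ga0 | exact: ler0n].
    rewrite tn; lra.
  have f1 : K * d * (theta * n%:R) <= K * d * t by apply: ler_wpM2l => //; exact: ltW.
  have f2 : K * d * (rho * n%:R) <= K * d * t by apply: ler_wpM2l => //; exact: ltW.
  move: LB UB c1' c2' c3 f1 f2.
  move: (frob _ _) => F0 LB UB c1' c2' c3 f1 f2.
  lra.
rewrite ler_pM2l // in key.
have key4 : 20 * (q ^+ 4 * X) <= 10 * (q ^+ 2 * b) + 4 * b + 5 * t.
  have -> : q ^+ 4 = K ^+ 2 by rewrite -qK -exprM.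
  rewrite qK; lra.
exact: arith_tiny q100 b0 hX hbt key4.
Qed.


Unset Implicit Arguments. Set Strict Implicit.

Theorem mainTheorem13 (R : realType) (n : nat) (Ahat : 'M[R]_n)
    (l lt2 : 'I_n -> R) (zeta d K theta gamma : R)
    (S : {set 'I_n}) (F : 'M[R]_n) (Y Z : 'M[R]_#|S|) :
  is_sign_vector l -> is_sign_vector lt2 ->
  0 < zeta < 1 -> 0 < d -> 10 ^+ 4 <= K ->
  (1 - theta) * n%:R <= #|[set i | l i == lt2 i]|%:R ->
  theta <= zeta ->
  gamma <= zeta ->
  (1 - gamma) * n%:R <= #|S|%:R ->
  (forall i j : 'I_#|S|, 0 <= submxSS S (hadamard F (outer lt2)) i j) ->
  submxSS S (Ahat - F) = Y + Z ->
  opnorm Y <= K * d ->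
  (forall i j : 'I_#|S|, `|Z i j| <= K * d / (zeta * n%:R)) ->
  resolvable (submxSS S (hadamard (Ahat - F) (outer lt2)))
             (10 * d * K ^+ 3) (gamma * d * K) ->
  forall (rho : R) (w : 'I_n -> R) (W N : 'M[R]_n),
    boosting_feasible Ahat l zeta d K rho w W N ->
    rho <= theta + gamma ->
    #|[set i in S | (w i <= 1 - (Num.sqrt K)^-1) && (l i != lt2 i)]|%:R
      <= 10 * (theta + gamma) * n%:R / Num.sqrt K.
Proof.
move=> hl hlt /andP[z0 z1] d0 hK hagr hth hga hSc hF hdec hY hZ hres rho w W N hfeas hrho.
set B := [set i in S | _].
have [n0|npos] := posnP n.
  have : (#|B| <= #|'I_n|)%N := max_card _.
  rewrite card_ord => hB; have -> : #|B| = 0%N by move: hB; move: (#|B|) => k; rewrite n0 leqn0 => /eqP.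
  by rewrite n0 mulr0 mul0r.
have nR : 0 < n%:R :> R by rewrite ltr0n.
have mn : #|S|%:R <= n%:R :> R.
  by rewrite ler_nat; have := max_card (mem S); rewrite card_ord.
set agree := [set i | l i == lt2 i] in hagr.
have an : #|agree|%:R <= n%:R :> R.
  by rewrite ler_nat; have := max_card (mem agree); rewrite card_ord.
have dis : #|~: agree|%:R + #|agree|%:R = n%:R :> R.
  by rewrite -natrD addnC cardsC card_ord.
have th0 : 0 <= theta.
  have : 0 <= theta * n%:R by lra.
  by rewrite pmulr_lge0.
have ga0 : 0 <= gamma.
  have : 0 <= gamma * n%:R by lra.
  by rewrite pmulr_lge0.
have hdis : \sum_i ((l i != lt2 i)%:R : R) <= theta * n%:R.
  have -> : \sum_i ((l i != lt2 i)%:R : R) = #|~: agree|%:R.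
    by rewrite -(@sum_ind R _ (~: agree)); apply: eq_bigr => i _; rewrite !inE.
  lra.
have hC : forall k k' : 'I_#|S|, Ahat (enum_val k) (enum_val k') - F (enum_val k) (enum_val k') = Y k k' + Z k k'.
  by move=> k k'; move/matrixP: hdec => /(_ k k'); rewrite !mxE.
have hF' : forall k k' : 'I_#|S|,
    0 <= F (enum_val k) (enum_val k') * (lt2 (enum_val k) * lt2 (enum_val k')).
  by move=> k k'; have := hF k k'; rewrite !mxE.
move: hfeas => [/andP[r0 rz] [hN [hw [hsw [hW0 [hWd hcon]]]]]].
have hN0 : forall i j, 0 <= N i j by move=> i j; case: hN => hNe _; case/andP: (hNe i j).
have BS : forall i, i \in B -> i \in S by move=> i; rewrite inE => /andP[].
have Bdis : forall i, i \in B -> l i != lt2 i by move=> i; rewrite !inE => /andP[_ /andP[]].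
have Bw : forall i, i \in B -> w i <= 1 - (Num.sqrt K)^-1.
  by move=> i; rewrite !inE => /andP[_ /andP[]].
rewrite leNgt; apply/negP => hb.
have [ztiny|zbig] := lerP zeta (10 ^- 7).
  exact: (contra_tiny hl hlt BS Bdis hC hF' hW0 hWd hw hN0 nR z0 ztiny d0 hK th0 hth ga0 hga r0 hrho
    Bw hdis hSc mn hY hZ hres hN hsw hcon hb).
have m0 : 0 < #|S|%:R :> R.
  have : 0 < (1 - gamma) * n%:R by apply: mulr_gt0 => //; lra.
  lra.
have g01 : 0 <= gamma <= 1 by apply/andP; split; lra.
exact: (contra_big hlt z0 d0 hK g01 nR m0 mn hC hY hZ hres zbig).
Qed.
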